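(* Fix an integer $m\ge 3$. Then $\lim_{n\to\infty}|\tau_{C_m\odot\overline{K}_n}|=\infty$.
   Context: $C_m$ is the cycle of length $m$. An edge-magic labeling of a $(p,q)$-graph $G$ (with $p$ vertices and $q$ edges) is a bijection $f:V(G)\cup E(G)\to[1,p+q]$ such that $f(x)+f(xy)+f(y)$ equals a constant (the valence) for every edge $xy$. For a graph $H$, $\tau_H$ is the set of integers that are valences of edge-magic labelings of $H$. $G\odot\overline{K}_n$ is the graph obtained from $G$ by attaching $n$ new pendant vertices to each vertex of $G$. *)

(* Defs.v *)
From mathcomp Require Import all_boot.
Set Implicit Arguments. Unset Strict Implicit. Unset Printing Implicit Defensive.

(* A (simple) graph is given by a finite vertex type V and an adjacency
   relation adj (assumed symmetric/irreflexive by the instances below). *)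
Definition edges (V : finType) (adj : rel V) : {set {set V}} :=
  [set e : {set V} | [exists x, exists y, adj x y && (e == [set x; y])]].

Definition elt (V : finType) (adj : rel V) : finType :=
  (V + {e : {set V} | e \in edges adj})%type.

Definition edge_magic_valence (V : finType) (adj : rel V)
    (f : elt adj -> nat) (k : nat) : Prop :=
  injective f /\
  (forall d, 1 <= f d <= #|elt adj|) /\
  (forall j, 1 <= j <= #|elt adj| -> exists d, f d = j) /\
  (forall (x y : V) (exy : [set x; y] \in edges adj), adj x y ->
     f (inl x) + f (inr (exist _ [set x; y] exy)) + f (inl y) = k).

Definition in_tau (V : finType) (adj : rel V) (k : nat) : Prop :=
  exists f : elt adj -> nat, edge_magic_valence f k.

Definition tau_card_ge (V : finType) (adj : rel V) (M : nat) : Prop :=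
  exists s : seq nat, uniq s /\ M <= size s /\ (forall k, k \in s -> in_tau adj k).

(* The corona C_m ⊙ \bar{K}_n: cycle vertices inl i (i < m), and pendant
   vertices inr (i, j) (j < n) attached to cycle vertex i. *)
Definition corona_vertex (m n : nat) : finType := ('I_m + ('I_m * 'I_n))%type.

Definition cycle_adj (m : nat) (i j : 'I_m) : bool :=
  (val j == (val i).+1 %% m) || (val i == (val j).+1 %% m).

Definition corona_adj (m n : nat) : rel (corona_vertex m n) :=
  fun u v =>
    match u, v with
    | inl i, inl j => cycle_adj i j
    | inl i, inr p => i == p.1
    | inr p, inl i => i == p.1
    | inr _, inr _ => false
    end.
Arguments corona_adj : clear implicits.

(* Main.v *)
Require Import Defs.
From mathcomp Require Import all_boot zify.
Set Implicit Arguments. Unset Strict Implicit. Unset Printing Implicit Defensive.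

Lemma enc_inj b a t a' t' : 0 < t <= b -> 0 < t' <= b -> a * b + t = a' * b + t' -> a = a' /\ t = t'.
Proof.
move=> ht ht' he.
have [hl|hl|heq] := ltngtP a a'.
- have : a.+1 * b <= a' * b by rewrite leq_mul2r hl orbT.
  rewrite mulSn; move: he; move: (a * b) (a' * b) => X Y; lia.
- have : a'.+1 * b <= a * b by rewrite leq_mul2r hl orbT.
  rewrite mulSn; move: he; move: (a * b) (a' * b) => X Y; lia.
- subst a; split => //; move: he; move: (a' * b) => X; lia.
Qed.

Lemma nxt_eq m i : i < m -> i.+1 %% m = if i.+1 == m then 0 else i.+1.
Proof. move=> hi; case: eqP => [->|hne]; first by rewrite modnn. rewrite modn_small //; lia. Qed.

Lemma nxt_inj m i j : i < m -> j < m -> i.+1 %% m = j.+1 %% m -> i = j.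
Proof. move=> hi hj; rewrite !nxt_eq //; do 2 case: ifP => ?; lia. Qed.

Lemma nxt_lt m i : 0 < m -> i.+1 %% m < m.
Proof. by move=> hm; rewrite ltn_pmod. Qed.

Definition toff (rho j : nat) := if j.+1 < rho then j.+1 else j.+2.

Lemma tt_neq rho j : toff rho j != rho.
Proof. rewrite /toff; case: ifP => ?; lia. Qed.
Lemma tt_inj rho j j' : toff rho j = toff rho j' -> j = j'.
Proof. rewrite /toff; do 2 case: ifP => ?; lia. Qed.
Lemma tt_range rho n (j : 'I_n) : 0 < toff rho j <= n.+1.
Proof. have := ltn_ord j; rewrite /toff; case: ifP => ?; lia. Qed.


Definition fV m n (P : nat -> nat) (rho : nat) (v : corona_vertex m n) : nat :=
  match v with
  | inl i => P (i.+1 %% m) * n.+1 + rho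
  | inr ij => P ij.1 * n.+1 + toff rho ij.2
  end.

Definition ec m n (Q : nat -> nat) (rho : nat) (x y : corona_vertex m n) : nat * nat :=
  match x, y with
  | inl i, inl j => if val j == i.+1 %% m then (Q (i.+1 %% m), n.+2 - rho) else (Q (j.+1 %% m), n.+2 - rho)
  | inl _, inr ij => (Q ij.1, n.+2 - toff rho ij.2)
  | inr ij, inl _ => (Q ij.1, n.+2 - toff rho ij.2)
  | _, _ => (0, 0)
  end.

Lemma adj_cases m n (Q : nat -> nat) rho (x y : corona_vertex m n) : 2 <= m -> corona_adj m n x y ->
  (exists l : 'I_m, [set x; y] = [set inl l; inl (ordS l)] /\ ec Q rho x y = (Q (l.+1 %% m), n.+2 - rho)
       /\ (forall P, fV P rho x + fV P rho y = @fV m n P rho (inl l) + @fV m n P rho (inl (ordS l))))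
  \/ (exists (i : 'I_m) (j : 'I_n), [set x; y] = [set inl i; inr (i, j)] /\ ec Q rho x y = (Q i, n.+2 - toff rho j)
       /\ (forall P, fV P rho x + fV P rho y = @fV m n P rho (inl i) + @fV m n P rho (inr (i, j)))).
Proof.
move=> hm.
case: x => [i|[i j]]; case: y => [i'|[i' j']] //=.
- rewrite /cycle_adj => hadj.
  have [he|hne] := eqVneq (val i') (i.+1 %% m).
    left; exists i; have -> : i' = ordS i by apply: val_inj.
    by split=> //; rewrite /= he eqxx.
  have he' : val i = (val i').+1 %% m by move: hadj; rewrite (negbTE hne) /= => /eqP.
  left; exists i'; have hi : i = ordS i' by apply: val_inj.
  split; first by rewrite hi setUC.
  split=> //.
  by move=> P; rewrite hi /= addnC.
- move=> /eqP ->; right; exists i', j'; split=> //.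
- move=> /eqP ->; right; exists i, j; split; first by rewrite setUC.
  by split=> // P; rewrite addnC.
Qed.


Definition Pe (p w : nat) : nat :=
 if w == 0 then 3*p - 1
 else if w <= p - 1 then (if w %% 2 == 1 then (w+1) %/ 2 else p - 2 + w %/ 2)
 else if w == p then (3*p - 1) %/ 2
 else if w == p+1 then (3*p-1) %/ 2 - 1
 else if w <= 2*p - 2 then (if w %% 2 == 1 then (w - 1) %/ 2 else p - 1 + w %/ 2)
 else 0.

Definition Qe (p w : nat) : nat :=
 if w == 0 then 2*p - 1
 else if w <= p - 2 then 4*p - w
 else if w == p - 1 then (if p %% 2 == 0 then 3*p else 2*p+2)
 else if w == p then (if p %% 2 == 0 then 2*p+2 else 2*p+1)
 else if w == p + 1 then (if p %% 2 == 0 then 2*p+1 else 3*p)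
 else if w <= 2*p - 3 then 4*p - w
 else if w == 2*p - 2 then 3*p+1
 else 2*p.

Ltac splitall := repeat (case: ifP => ?).

Lemma Pe_inj p w w' : 4 <= p -> w < 2*p -> w' < 2*p -> Pe p w = Pe p w' -> w = w'.
Proof. move=> hp hw hw'; rewrite /Pe; splitall; lia. Qed.

Lemma Qe_inj p w w' : 4 <= p -> w < 2*p -> w' < 2*p -> Qe p w = Qe p w' -> w = w'.
Proof. move=> hp hw hw'; rewrite /Qe; splitall; lia. Qed.

Lemma PQe p w w' : 4 <= p -> w < 2*p -> w' < 2*p -> Pe p w <> Qe p w'.
Proof. move=> hp hw hw'; rewrite /Pe /Qe; splitall; lia. Qed.

Lemma Pe_lt p w : 4 <= p -> w < 2*p -> Pe p w < 4*p.
Proof. move=> hp hw; rewrite /Pe; splitall; lia. Qed.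
Lemma Qe_lt p w : 4 <= p -> w < 2*p -> Qe p w < 4*p.
Proof. move=> hp hw; rewrite /Qe; splitall; lia. Qed.

Lemma PQe_sum p w : 4 <= p -> w < 2*p -> Pe p w + Qe p w + Pe p (w.+1 %% (2*p)) = 5*p - 1.
Proof.
move=> hp hw.
have [->|hne] := eqVneq w (2*p - 1).
  rewrite (_ : (2*p - 1).+1 = 2*p); last lia. rewrite modnn /Pe /Qe /=. splitall; lia.
rewrite modn_small; last lia.
rewrite /Pe /Qe; splitall; lia.
Qed.

Definition Po (r w : nat) : nat := if w %% 2 == 1 then r.+1 + w %/ 2 else w %/ 2.
Definition Qo (r w : nat) : nat := if w == 2*r then 4*r+1 else 4*r - w.

Lemma Po_inj r w w' : 1 <= r -> w < 2*r+1 -> w' < 2*r+1 -> Po r w = Po r w' -> w = w'.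
Proof. move=> hr hw hw'; rewrite /Po; splitall; lia. Qed.
Lemma Qo_inj r w w' : 1 <= r -> w < 2*r+1 -> w' < 2*r+1 -> Qo r w = Qo r w' -> w = w'.
Proof. move=> hr hw hw'; rewrite /Qo; splitall; lia. Qed.
Lemma PQo r w w' : 1 <= r -> w < 2*r+1 -> w' < 2*r+1 -> Po r w <> Qo r w'.
Proof. move=> hr hw hw'; rewrite /Po /Qo; splitall; lia. Qed.
Lemma Po_lt r w : 1 <= r -> w < 2*r+1 -> Po r w < 2*(2*r+1).
Proof. move=> hr hw; rewrite /Po; splitall; lia. Qed.
Lemma Qo_lt r w : 1 <= r -> w < 2*r+1 -> Qo r w < 2*(2*r+1).
Proof. move=> hr hw; rewrite /Qo; splitall; lia. Qed.
Lemma PQo_sum r w : 1 <= r -> w < 2*r+1 -> Po r w + Qo r w + Po r (w.+1 %% (2*r+1)) = 5*r+1.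
Proof.
move=> hr hw.
have [->|hne] := eqVneq w (2*r).
  rewrite (_ : (2*r).+1 = 2*r+1); last lia. rewrite modnn /Po /Qo /=. splitall; lia.
rewrite modn_small; last lia.
rewrite /Po /Qo; splitall; lia.
Qed.

Definition emt_spec (m K : nat) (P Q : nat -> nat) : Prop :=
  [/\ (forall w, w < m -> P w < 2*m /\ Q w < 2*m),
      (forall w, w < m -> P w + Q w + P (w.+1 %% m) = K),
      (forall w w', w < m -> w' < m -> P w = P w' -> w = w'),
      (forall w w', w < m -> w' < m -> Q w = Q w' -> w = w') &
      (forall w w', w < m -> w' < m -> P w <> Q w')].

Lemma emt_small4 : emt_spec 4 9 (fun w => nth 0 [:: 0; 2; 1; 5] w) (fun w => nth 0 [:: 7; 6; 3; 4] w).
Proof.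
split.
- by case=> [|[|[|[|w]]]].
- by case=> [|[|[|[|w]]]].
- by case=> [|[|[|[|w]]]]; case=> [|[|[|[|w']]]].
- by case=> [|[|[|[|w]]]]; case=> [|[|[|[|w']]]].
- by case=> [|[|[|[|w]]]]; case=> [|[|[|[|w']]]].
Qed.

Lemma emt_small6 : emt_spec 6 14 (fun w => nth 0 [:: 0; 4; 1; 2; 5; 6] w) (fun w => nth 0 [:: 10; 9; 11; 7; 3; 8] w).
Proof.
split.
- by case=> [|[|[|[|[|[|w]]]]]].
- by case=> [|[|[|[|[|[|w]]]]]].
- by case=> [|[|[|[|[|[|w]]]]]]; case=> [|[|[|[|[|[|w']]]]]].
- by case=> [|[|[|[|[|[|w]]]]]]; case=> [|[|[|[|[|[|w']]]]]].
- by case=> [|[|[|[|[|[|w]]]]]]; case=> [|[|[|[|[|[|w']]]]]].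
Qed.

Lemma emt_ex m : 3 <= m -> exists K P Q, emt_spec m K P Q.
Proof.
move=> hm.
have [hodd|hev] := boolP (odd m).
  pose r := m %/ 2.
  have hmr : m = 2*r+1 by rewrite /r; move: hodd; rewrite -[in X in X -> _](odd_double_half m) => /eqP; lia.
  have hr : 1 <= r by lia.
  exists (5*r+1), (Po r), (Qo r); rewrite hmr; split.
  - by move=> w hw; split; [apply: Po_lt|apply: Qo_lt].
  - by move=> w hw; apply: PQo_sum.
  - by move=> w w'; apply: Po_inj.
  - by move=> w w'; apply: Qo_inj.
  - by move=> w w'; apply: PQo.
pose p := m %/ 2.
have hmp : m = 2*p by rewrite /p; move: hev; rewrite -[in X in X -> _](odd_double_half m); lia.
have [hp4|hp] := leqP 4 p.
  exists (5*p-1), (Pe p), (Qe p); rewrite hmp; split.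
  - by move=> w hw; move: (Pe_lt hp4 hw) (Qe_lt hp4 hw); lia.
  - by move=> w hw; apply: PQe_sum.
  - by move=> w w'; apply: Pe_inj.
  - by move=> w w'; apply: Qe_inj.
  - by move=> w w'; apply: PQe.
have : (p == 2) || (p == 3) by lia.
case/orP=> /eqP hp'; rewrite hmp hp'.
  by eexists; eexists; eexists; apply: emt_small4.
by eexists; eexists; eexists; apply: emt_small6.
Qed.


Lemma sum_k m n K P Q rho (x y : corona_vertex m n) : 2 <= m -> emt_spec m K P Q -> 0 < rho <= n.+1 ->
  corona_adj m n x y ->
  fV P rho x + fV P rho y + ((ec Q rho x y).1 * n.+1 + (ec Q rho x y).2) = (K+1) * n.+1 + rho + 1.
Proof.
move=> hm [_ hsum _ _ _] hrho hadj.
case: (adj_cases Q rho hm hadj) => [[l [_ [-> ->]]]|[i [j [_ [-> ->]]]]] /=.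
- have ha : l.+1 %% m < m by rewrite ltn_pmod //; lia.
  have := hsum _ ha.
  move: (P (l.+1 %% m)) (Q (l.+1 %% m)) (P ((l.+1 %% m).+1 %% m)) => a c d hK.
  rewrite -hK !mulnDl mul1n.
  move: (a * n.+1) (c * n.+1) (d * n.+1) => X Y Z; lia.
- have := hsum _ (ltn_ord i).
  have := tt_range rho j.
  move: (P i) (Q i) (P (i.+1 %% m)) (toff rho j) => a c d t ht hK.
  rewrite -hK !mulnDl mul1n.
  move: (a * n.+1) (c * n.+1) (d * n.+1) => X Y Z; lia.
Qed.


Definition vcode m n (P : nat -> nat) rho (v : corona_vertex m n) : nat * nat :=
  match v with
  | inl i => (P (i.+1 %% m), rho)
  | inr ij => (P ij.1, toff rho ij.2)
  end.

Lemma fV_vcode m n P rho (v : corona_vertex m n) : fV P rho v = (vcode P rho v).1 * n.+1 + (vcode P rho v).2.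
Proof. by case: v. Qed.

Lemma vcode_range m n P rho (v : corona_vertex m n) : 0 < rho <= n.+1 -> 0 < (vcode P rho v).2 <= n.+1.
Proof. by case: v => [i|[i j]] //= _; apply: tt_range. Qed.

Lemma ec_range m n Q rho (x y : corona_vertex m n) : 2 <= m -> 0 < rho <= n.+1 -> corona_adj m n x y ->
  0 < (ec Q rho x y).2 <= n.+1.
Proof.
move=> hm hr hadj; case: (adj_cases Q rho hm hadj) => [[l [_ [-> _]]]|[i [j [_ [-> _]]]]] /=.
  lia.
have := tt_range rho j; lia.
Qed.

Lemma vcode_inj m n K P Q rho (v1 v2 : corona_vertex m n) : 2 <= m -> emt_spec m K P Q ->
  vcode P rho v1 = vcode P rho v2 -> v1 = v2.
Proof.
move=> hm [_ _ hP _ _].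
have hm0 : 0 < m by lia.
case: v1 => [i1|[i1 j1]]; case: v2 => [i2|[i2 j2]] /= he; case: he.
- move=> h.
  have -> : i1 = i2 by apply: val_inj; apply: nxt_inj (ltn_ord _) (ltn_ord _) _; apply: (hP _ _ _ _ h); apply: nxt_lt.
  done.
- by move=> _ h; move: (tt_neq rho j2); rewrite -h eqxx.
- by move=> _ h; move: (tt_neq rho j1); rewrite h eqxx.
- move=> h /tt_inj hj.
  have -> : i1 = i2 by apply: val_inj; apply: (hP _ _ (ltn_ord _) (ltn_ord _) h).
  by have -> : j1 = j2 by apply: val_inj.
Qed.

Lemma ec_set_inj m n K P Q rho (x1 y1 x2 y2 : corona_vertex m n) : 2 <= m -> emt_spec m K P Q ->
  0 < rho <= n.+1 -> corona_adj m n x1 y1 -> corona_adj m n x2 y2 ->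
  ec Q rho x1 y1 = ec Q rho x2 y2 -> [set x1; y1] = [set x2; y2].
Proof.
move=> hm [_ _ _ hQ _] hr h1 h2.
have hm0 : 0 < m by lia.
case: (adj_cases Q rho hm h1) => [[l1 [-> [-> _]]]|[i1 [j1 [-> [-> _]]]]];
case: (adj_cases Q rho hm h2) => [[l2 [-> [-> _]]]|[i2 [j2 [-> [-> _]]]]] he; case: he.
- move=> h.
  have -> : l1 = l2 by apply: val_inj; apply: nxt_inj (ltn_ord _) (ltn_ord _) _; apply: (hQ _ _ _ _ h); apply: nxt_lt.
  done.
- move=> _ h; have := tt_range rho j2; move: (tt_neq rho j2) h; move: (toff rho j2) => t; lia.
- move=> _ h; have := tt_range rho j1; move: (tt_neq rho j1) h; move: (toff rho j1) => t; lia.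
- move=> h ht.
  have ei : i1 = i2 by apply: val_inj; apply: (hQ _ _ (ltn_ord _) (ltn_ord _) h).
  have r1 := tt_range rho j1; have r2 := tt_range rho j2.
  have ej : toff rho j1 = toff rho j2 by move: ht r1 r2; move: (toff rho j1) (toff rho j2) => t1 t2; lia.
  have -> : j1 = j2 by apply: val_inj; apply: tt_inj ej.
  by rewrite ei.
Qed.

Lemma ec_vcode_neq m n K P Q rho (v x y : corona_vertex m n) : 2 <= m -> emt_spec m K P Q ->
  corona_adj m n x y -> (vcode P rho v).1 <> (ec Q rho x y).1.
Proof.
move=> hm [_ _ _ _ hPQ] hadj.
have hm0 : 0 < m by lia.
case: (adj_cases Q rho hm hadj) => [[l [_ [-> _]]]|[i [j [_ [-> _]]]]] /=;
case: v => [i'|[i' j']] /=; apply: hPQ; by rewrite ?nxt_lt.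
Qed.


Definition lab m n K P rho (d : elt (corona_adj m n)) : nat :=
  match d with
  | inl v => fV P rho v
  | inr e => ((K+1) * n.+1 + rho + 1) - \sum_(v in val e) fV P rho v
  end.

Lemma adj_neq m n (x y : corona_vertex m n) : 2 <= m -> corona_adj m n x y -> x != y.
Proof.
move=> hm; case: x => [i|[i j]]; case: y => [i'|[i' j']] //= hadj.
apply/eqP => -[hii]; move: hadj; rewrite hii /cycle_adj orbb nxt_eq //.
  by case: ifP => ? /eqP; lia.
exact: ltn_ord.
Qed.

Lemma sum2 (T : finType) (x y : T) (F : T -> nat) : x != y -> \sum_(v in [set x; y]) F v = F x + F y.
Proof. by move=> hxy; rewrite big_setU1 ?big_set1 // in_set1. Qed.

Lemma edge_repr m n (e : {set corona_vertex m n}) : e \in edges (corona_adj m n) ->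
  exists x y, corona_adj m n x y /\ e = [set x; y].
Proof. by rewrite inE => /existsP [x /existsP [y /andP [h /eqP ->]]]; exists x, y. Qed.

Lemma mem_edges m n (x y : corona_vertex m n) : corona_adj m n x y -> [set x; y] \in edges (corona_adj m n).
Proof. by move=> h; rewrite inE; apply/existsP; exists x; apply/existsP; exists y; rewrite h eqxx. Qed.

Lemma lab_pair m n K P Q rho (x y : corona_vertex m n) : 2 <= m -> emt_spec m K P Q -> 0 < rho <= n.+1 ->
  corona_adj m n x y ->
  ((K+1) * n.+1 + rho + 1) - \sum_(v in [set x; y]) fV P rho v = (ec Q rho x y).1 * n.+1 + (ec Q rho x y).2.
Proof.
move=> hm hE hr hadj; rewrite sum2 ?adj_neq //.
rewrite -(sum_k hm hE hr hadj); lia.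
Qed.

Lemma lab_edge m n K P Q rho (e : {e : {set corona_vertex m n} | e \in edges (corona_adj m n)}) :
  2 <= m -> emt_spec m K P Q -> 0 < rho <= n.+1 ->
  exists x y, corona_adj m n x y /\ val e = [set x; y] /\
    lab K P rho (inr e) = (ec Q rho x y).1 * n.+1 + (ec Q rho x y).2.
Proof.
move=> hm hE hr; case: e => e he /=.
have [x [y [hadj he']]] := edge_repr he.
exists x, y; split=> //; split=> //.
by rewrite he' (lab_pair hm hE hr hadj).
Qed.

Lemma lab_inj m n K P Q rho : 2 <= m -> emt_spec m K P Q -> 0 < rho <= n.+1 ->
  injective (lab (m := m) (n := n) K P rho).
Proof.
move=> hm hE hr.
case=> [v1|e1] [v2|e2].
- rewrite /= !fV_vcode => h.
  have [h1 h2] := enc_inj (vcode_range P v1 hr) (vcode_range P v2 hr) h.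
  congr inl; apply: (vcode_inj (rho := rho) hm hE).
  by move: h1 h2; case: (vcode P rho v1) => a b; case: (vcode P rho v2) => c d /= -> ->.
- have [x [y [hadj [_ ->]]]] := lab_edge e2 hm hE hr.
  rewrite /= fV_vcode => h.
  have [h1 _] := enc_inj (vcode_range P v1 hr) (ec_range Q hm hr hadj) h.
  by case: (ec_vcode_neq (rho := rho) (v := v1) hm hE hadj h1).
- have [x [y [hadj [_ ->]]]] := lab_edge e1 hm hE hr.
  rewrite /= fV_vcode => h.
  have [h1 _] := enc_inj (ec_range Q hm hr hadj) (vcode_range P v2 hr) h.
  by case: (ec_vcode_neq (rho := rho) (v := v2) hm hE hadj (esym h1)).
- have [x1 [y1 [hadj1 [hv1 ->]]]] := lab_edge e1 hm hE hr.
  have [x2 [y2 [hadj2 [hv2 ->]]]] := lab_edge e2 hm hE hr.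
  move=> h.
  have [h1 h2] := enc_inj (ec_range Q hm hr hadj1) (ec_range Q hm hr hadj2) h.
  have hec : ec Q rho x1 y1 = ec Q rho x2 y2.
    by move: h1 h2; case: (ec Q rho x1 y1) => a b; case: (ec Q rho x2 y2) => c d /= -> ->.
  congr inr; apply: val_inj; rewrite hv1 hv2.
  exact: (ec_set_inj hm hE hr hadj1 hadj2 hec).
Qed.


Lemma enc_le b a c t : a < c -> 0 < t <= b -> a * b + t <= c * b.
Proof.
move=> hac ht; have : a.+1 * b <= c * b by rewrite leq_mul2r hac orbT.
rewrite mulSn; move: (a * b) (c * b) => X Y; lia.
Qed.

Lemma vcode1_lt m n K P Q rho (v : corona_vertex m n) : 2 <= m -> emt_spec m K P Q -> (vcode P rho v).1 < 2 * m.
Proof.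
move=> hm [hlt _ _ _ _]; case: v => [i|[i j]] /=; apply: (proj1 (hlt _ _)) => //.
by apply: nxt_lt; lia.
Qed.

Lemma ec1_lt m n K P Q rho (x y : corona_vertex m n) : 2 <= m -> emt_spec m K P Q -> corona_adj m n x y ->
  (ec Q rho x y).1 < 2 * m.
Proof.
move=> hm [hlt _ _ _ _] hadj.
case: (adj_cases Q rho hm hadj) => [[l [_ [-> _]]]|[i [j [_ [-> _]]]]] /=; apply: (proj2 (hlt _ _)) => //.
by apply: nxt_lt; lia.
Qed.

Lemma lab_range m n K P Q rho (d : elt (corona_adj m n)) : 2 <= m -> emt_spec m K P Q -> 0 < rho <= n.+1 ->
  0 < lab K P rho d <= 2 * m * n.+1.
Proof.
move=> hm hE hr; case: d => [v|e].
  rewrite /= fV_vcode; have := vcode_range P v hr; have := enc_le (vcode1_lt rho v hm hE) (vcode_range P v hr).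
  move: (_ * n.+1) => X; rewrite -mulnA; lia.
have [x [y [hadj [_ ->]]]] := lab_edge e hm hE hr.
have := ec_range Q hm hr hadj; have := enc_le (ec1_lt rho hm hE hadj) (ec_range Q hm hr hadj).
move: (_ * n.+1) => X; rewrite -mulnA; lia.
Qed.

Lemma adj_cyc m n (l : 'I_m) : corona_adj m n (inl l) (inl (ordS l)).
Proof. by rewrite /= /cycle_adj eqxx. Qed.
Lemma adj_pen m n (ij : 'I_m * 'I_n) : corona_adj m n (inl ij.1) (inr ij).
Proof. by rewrite /= eqxx. Qed.

Definition gE m n (v : corona_vertex m n) : {e : {set corona_vertex m n} | e \in edges (corona_adj m n)} :=
  match v with
  | inl l => exist _ [set inl l; inl (ordS l)] (mem_edges (adj_cyc n l))
  | inr ij => exist _ [set inl ij.1; inr ij] (mem_edges (adj_pen ij))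
  end.

Definition ecode m n (Q : nat -> nat) rho (v : corona_vertex m n) : nat * nat :=
  match v with
  | inl l => (Q (l.+1 %% m), n.+2 - rho)
  | inr ij => (Q ij.1, n.+2 - toff rho ij.2)
  end.

Lemma lab_gE m n K P Q rho (v : corona_vertex m n) : 2 <= m -> emt_spec m K P Q -> 0 < rho <= n.+1 ->
  lab K P rho (inr (gE v)) = (ecode Q rho v).1 * n.+1 + (ecode Q rho v).2.
Proof.
move=> hm hE hr; case: v => [l|ij] /=.
  by rewrite (lab_pair hm hE hr (adj_cyc _ _)) /= eqxx.
by rewrite (lab_pair hm hE hr (adj_pen _)).
Qed.

Lemma gE_inj m n K P Q rho : 2 <= m -> emt_spec m K P Q -> 0 < rho <= n.+1 -> injective (@gE m n).
Proof.
move=> hm hE hr v1 v2 hg.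
have := congr1 (lab K P rho) (congr1 inr hg).
rewrite !(lab_gE _ hm hE hr); clear hg.
have er : forall v : corona_vertex m n, 0 < (ecode Q rho v).2 <= n.+1.
  move=> v; case: v => [l|ij] /=; first by move: hr; clear; lia.
  by have := tt_range rho ij.2; move: hr (toff rho ij.2) => hr t; lia.
move=> h; have [h1 h2] := enc_inj (er v1) (er v2) h.
have hm0 : 0 < m by lia.
case: hE => [_ _ _ hQ _].
move: h1 h2; clear h; case: v1 => [l1|[i1 j1]]; case: v2 => [l2|[i2 j2]] /= h1 h2.
- have -> : l1 = l2 by apply: val_inj; apply: nxt_inj (ltn_ord _) (ltn_ord _) _; apply: (hQ _ _ _ _ h1); apply: nxt_lt.
  done.
- exfalso; have := tt_range rho j2; move: (tt_neq rho j2) h2; move: (toff rho j2) => t; lia.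
- exfalso; have := tt_range rho j1; move: (tt_neq rho j1) h2; move: (toff rho j1) => t; lia.
- have ei : i1 = i2 by apply: val_inj; apply: (hQ _ _ (ltn_ord _) (ltn_ord _) h1).
  have r1 := tt_range rho j1; have r2 := tt_range rho j2.
  have ej : toff rho j1 = toff rho j2 by move: h2 r1 r2; move: (toff rho j1) (toff rho j2) => t1 t2; lia.
  have -> : j1 = j2 by apply: val_inj; apply: tt_inj ej.
  by rewrite ei.
Qed.

Lemma card_V m n : #|corona_vertex m n| = m * n.+1.
Proof. by rewrite /corona_vertex card_sum card_prod !card_ord mulnS. Qed.

Lemma lab_ltI m n K P Q rho : 2 <= m -> emt_spec m K P Q -> 0 < rho <= n.+1 ->
  forall d : elt (corona_adj m n), (lab K P rho d).-1 < 2 * m * n.+1.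
Proof. by move=> hm hE hr d; have := lab_range d hm hE hr; lia. Qed.

Lemma hord_inj m n K P Q rho (hm : 2 <= m) (hE : emt_spec m K P Q) (hr : 0 < rho <= n.+1) :
  injective (fun d : elt (corona_adj m n) => Ordinal (lab_ltI hm hE hr d)).
Proof.
move=> d1 d2 [] h; apply: (lab_inj hm hE hr).
by have := lab_range d1 hm hE hr; have := lab_range d2 hm hE hr; lia.
Qed.

Lemma card_elt m n K P Q rho : 2 <= m -> emt_spec m K P Q -> 0 < rho <= n.+1 ->
  #|elt (corona_adj m n)| = 2 * m * n.+1.
Proof.
move=> hm hE hr.
apply/eqP; rewrite eqn_leq; apply/andP; split.
  by have := leq_card _ (@hord_inj m n K P Q rho hm hE hr); rewrite card_ord.
have h1 := leq_card _ (gE_inj hm hE hr).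
rewrite card_V in h1.
rewrite /elt card_sum.
have := card_V m n.
move: h1; move: #|_| => X; move: #|_| => Y.
rewrite -mulnA; move: (m * n.+1) => Z; lia.
Qed.


Lemma in_tau_k m n K P Q rho : 2 <= m -> emt_spec m K P Q -> 0 < rho <= n.+1 ->
  in_tau (corona_adj m n) ((K+1) * n.+1 + rho + 1).
Proof.
move=> hm hE hr.
exists (lab K P rho); split; first exact: (lab_inj hm hE hr).
split; first by move=> d; rewrite (card_elt hm hE hr); exact: (lab_range d hm hE hr).
split.
  rewrite (card_elt hm hE hr) => j hj.
  have hj' : j.-1 < 2 * m * n.+1 by lia.
  have hc : #|'I_(2 * m * n.+1)| <= #|elt (corona_adj m n)| by rewrite card_ord (card_elt hm hE hr).
  have := inj_card_onto (@hord_inj m n K P Q rho hm hE hr) hc (Ordinal hj').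
  move=> /codomP [d hd]; exists d.
  have := congr1 val hd => /= hv.
  by have := lab_range d hm hE hr; lia.
move=> x y exy hadj /=.
rewrite (lab_pair hm hE hr hadj).
have := sum_k hm hE hr hadj.
move: (fV P rho x) (fV P rho y) (_ * n.+1 + _) => a c e; lia.
Qed.

Unset Implicit Arguments.

Theorem mainTheorem5 (m : nat) (hm : 3 <= m) :
  forall M : nat, exists N : nat, forall n : nat, N <= n ->
    tau_card_ge (corona_adj m n) M.
Proof.
move=> M.
have [K [P [Q hE]]] := emt_ex hm.
have hm2 : 2 <= m by lia.
exists M => n hn.
exists [seq (K+1) * n.+1 + r + 1 | r <- iota 1 M]; split; last split.
- rewrite map_inj_uniq ?iota_uniq // => a b /= h; lia.
- by rewrite size_map size_iota.
- move=> k /mapP [r]; rewrite mem_iota => hr ->; apply: (in_tau_k (P := P) (Q := Q)) => //; lia.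
Qed.
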